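(* Let $m_1,m_2,m_3,m_4>0$, $M=\sum m_i$, $I(\mathbf{r})=\frac{1}{2M}\sum_{i<j}m_im_jr_{ij}^2$ and $P(\mathbf{r})=r_{12}r_{34}+r_{14}r_{23}-r_{13}r_{24}$ for $\mathbf{r}=(r_{12},r_{13},r_{14},r_{23},r_{24},r_{34})\in\mathbb{R}^6$. Then the set $\mathcal{M}=\{\mathbf{r}\in\mathbb{R}^6: I(\mathbf{r})=1,\ P(\mathbf{r})=0\}$ is diffeomorphic to the oriented Grassmannian $\mathrm{Gr}_+(2,4)=SO(4)/(SO(2)\times SO(2))$ of oriented 2-planes in $\mathbb{R}^4$, and to $S^2\times S^2$. *)

(* Defs.v *)
From HB Require Import structures.
From mathcomp Require Import all_boot all_order all_algebra.
From mathcomp Require Import all_classical all_reals all_analysis.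
Set Implicit Arguments. Unset Strict Implicit. Unset Printing Implicit Defensive.
Import Order.TTheory GRing.Theory Num.Theory.
Import numFieldNormedType.Exports.
Local Open Scope classical_set_scope.
Local Open Scope ring_scope.

(* C^k maps between normed spaces: existence of all directional derivatives
   of order <= k everywhere, all of them continuous (equivalent to the usual
   C^k in finite dimension). *)
Fixpoint Ck {R : realType} {V W : normedModType R} (k : nat) (f : V -> W) : Prop :=
  match k with
  | 0%N => continuous f
  | k'.+1 => continuous f /\ (forall x v, derivable f x v) /\
             (forall v : V, Ck k' (fun x => 'D_v f x))
  end.

Definition smooth {R : realType} {V W : normedModType R} (f : V -> W) : Prop :=
  forall k, Ck k f.

Definition diffeomorphic {R : realType} {V W : normedModType R}
  (A : set V) (B : set W) : Prop :=
  exists (f : V -> W) (g : W -> V),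
    [/\ smooth f, smooth g, f @` A `<=` B, g @` B `<=` A &
        (forall x, A x -> g (f x) = x) /\ (forall y, B y -> f (g y) = y)].

(* coordinates of r in R^6 : r = (r12, r13, r14, r23, r24, r34) *)
Definition rc {R : realType} (r : 'rV[R]_6) (k : nat) : R := r ord0 (inord k).

Definition inertia {R : realType} (m1 m2 m3 m4 : R) (r : 'rV[R]_6) : R :=
  (2 * (m1 + m2 + m3 + m4))^-1 *
  (m1 * m2 * (rc r 0) ^+ 2 + m1 * m3 * (rc r 1) ^+ 2 + m1 * m4 * (rc r 2) ^+ 2
 + m2 * m3 * (rc r 3) ^+ 2 + m2 * m4 * (rc r 4) ^+ 2 + m3 * m4 * (rc r 5) ^+ 2).

Definition Ppoly {R : realType} (r : 'rV[R]_6) : R :=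
  rc r 0 * rc r 5 + rc r 2 * rc r 3 - rc r 1 * rc r 4.

Definition Mset {R : realType} (m1 m2 m3 m4 : R) : set 'rV[R]_6 :=
  [set r | inertia m1 m2 m3 m4 r = 1 /\ Ppoly r = 0].

Definition SO4 {R : realType} : set 'M[R]_4 :=
  [set Q | Q *m Q^T = 1%:M /\ \det Q = 1].

(* Gr_+(2,4) = SO(4)/(SO(2)xSO(2)), realized as the SO(4)-orbit (under
   conjugation) of E = e1 e2^T - e2 e1^T, whose stabilizer is SO(2)xSO(2);
   the point Q E Q^T = u v^T - v u^T encodes the oriented plane spanned by
   the (oriented) orthonormal pair u = Q e1, v = Q e2. *)
Definition E12 {R : realType} : 'M[R]_4 :=
  \matrix_(i < 4, j < 4)
    (if (val i == 0%N) && (val j == 1%N) then 1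
     else if (val i == 1%N) && (val j == 0%N) then -1 else 0).

Definition Grplus24 {R : realType} : set 'M[R]_4 :=
  [set Q *m E12 *m Q^T | Q in SO4].

Definition S2xS2 {R : realType} : set 'rV[R]_6 :=
  [set x | (rc x 0)^+2 + (rc x 1)^+2 + (rc x 2)^+2 = 1 /\
           (rc x 3)^+2 + (rc x 4)^+2 + (rc x 5)^+2 = 1].

(* Main.v *)
Require Import Defs.
From HB Require Import structures.
From mathcomp Require Import all_boot all_order all_algebra.
From mathcomp Require Import all_classical all_reals all_analysis.
From mathcomp Require Import ring lra.
Import Order.TTheory GRing.Theory Num.Theory.
Import numFieldNormedType.Exports.
Local Open Scope classical_set_scope.
Local Open Scope ring_scope.

Section Gen.
Variable R : realType.

Lemma Ck_cst (V W : normedModType R) k (c : W) : Ck k (fun _ : V => c).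
Proof.
elim: k c => [|k IH] c /=; first exact: cst_continuous.
split; first exact: cst_continuous.
split; first by move=> x v; exact: derivable_cst.
move=> v.
have -> : (fun x => 'D_v (fun _ : V => c) x) = (fun _ => 0).
  by apply/funext => x; exact: derive_cst.
exact: IH.
Qed.

Lemma mx_linear_continuous m n (W : normedModType R)
  (f : {linear 'M[R]_(m,n) -> W}) : continuous f.
Proof.
have -> : (f : _ -> _) = fun x => \sum_(i < m) \sum_(j < n) x i j *: f (delta_mx i j).
  apply/funext => x; rewrite {1}(matrix_sum_delta x) linear_sum.
  apply: eq_bigr => i _; rewrite linear_sum; apply: eq_bigr => j _.
  by rewrite linearZ.
apply: continuous_big; first exact: add_continuous.
move=> i _; apply: continuous_big; first exact: add_continuous.
move=> j _ x; apply: continuousZr_tmp; exact: coord_continuous.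
Qed.

Lemma linear_smooth m n (W : normedModType R) (f : 'M[R]_(m,n) -> W) :
  linear f -> smooth f.
Proof.
move=> lf.
pose fL : {linear _ -> W} := HB.pack f (GRing.isLinear.Build _ _ _ _ f lf).
have fc : continuous fL := @mx_linear_continuous _ _ _ fL.
move=> [|k] /=; first exact fc.
split; first exact fc.
split.
  move=> x v; apply: diff_derivable; exact: (linear_differentiable (f:=fL)).
move=> v.
have -> : (fun x => 'D_v f x) = fun _ => f v.
  apply/funext=> x.
  rewrite (@deriveE _ _ _ fL); last exact: (linear_differentiable (f:=fL)).
  by rewrite (diff_lin (f:=fL)).
exact: Ck_cst.
Qed.
Definition ent (A : 'M[R]_4) (i j : nat) := A (inord i) (inord j).

Lemma rc_row (f : nat -> R) k : (k < 6)%N -> rc (\row_(j < 6) f (val j)) k = f k.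
Proof. by move=> hk; rewrite /rc mxE /= inordK. Qed.

Lemma ent_mx (f : nat -> nat -> R) i j : (i < 4)%N -> (j < 4)%N ->
  ent (\matrix_(a < 4, b < 4) f (val a) (val b)) i j = f i j.
Proof. by move=> hi hj; rewrite /ent mxE /= !inordK. Qed.

Lemma row6_eq (r r' : 'rV[R]_6) :
  (forall k, (k < 6)%N -> rc r k = rc r' k) -> r = r'.
Proof.
move=> H; apply/rowP => j; have := H (val j) (ltn_ord j).
by rewrite /rc inord_val.
Qed.

Lemma mx4_eq (A B : 'M[R]_4) :
  (forall i j, (i < 4)%N -> (j < 4)%N -> ent A i j = ent B i j) -> A = B.
Proof.
move=> H; apply/matrixP => i j; have := H (val i) (val j) (ltn_ord i) (ltn_ord j).
by rewrite /ent !inord_val.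
Qed.

Lemma ent_mul (A B : 'M[R]_4) i j : ent (A *m B) i j =
  ent A i 0 * ent B 0 j + ent A i 1 * ent B 1 j + ent A i 2 * ent B 2 j
  + ent A i 3 * ent B 3 j.
Proof.
rewrite /ent mxE !big_ord_recr big_ord0 /= add0r.
do 4 f_equal; try f_equal; (apply: val_inj; by rewrite /= inordK).
Qed.

Lemma ent_tr (A : 'M[R]_4) i j : ent A^T i j = ent A j i.
Proof. by rewrite /ent mxE. Qed.

Lemma ent_scale a (A : 'M[R]_4) i j : ent (a *: A) i j = a * ent A i j.
Proof. by rewrite /ent mxE. Qed.

Lemma ent_1 i j : (i < 4)%N -> (j < 4)%N -> ent 1%:M i j = (i == j)%:R.
Proof.
by move=> hi hj; rewrite /ent mxE -(inj_eq val_inj) /= !inordK.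
Qed.

Lemma ent_E12 i j : (i < 4)%N -> (j < 4)%N -> ent E12 i j =
  (if (i == 0%N) && (j == 1%N) then 1 else if (i == 1%N) && (j == 0%N) then -1 else 0).
Proof. by move=> hi hj; rewrite /ent mxE /= !inordK. Qed.

Lemma rc_lin a (u v : 'rV[R]_6) k : rc (a *: u + v) k = a * rc u k + rc v k.
Proof. by rewrite /rc !mxE. Qed.

Lemma ent_lin a (u v : 'M[R]_4) i j : ent (a *: u + v) i j = a * ent u i j + ent v i j.
Proof. by rewrite /ent !mxE. Qed.

End Gen.
Arguments ent {R} A i j.

Section Core.
Variable R : realType.
Variables s1 s2 s3 s4 t : R.
Hypotheses (hs1 : 0 < s1) (hs2 : 0 < s2) (hs3 : 0 < s3) (hs4 : 0 < s4) (hst : 0 < t).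
Hypothesis ht : (2 * (s1^+2 + s2^+2 + s3^+2 + s4^+2))^-1 = t^+2.

Definition cc (k : nat) : R := match k with
  | 0 => s1*s2*t | 1 => s1*s3*t | 2 => s1*s4*t | 3 => s2*s3*t | 4 => s2*s4*t
  | _ => s3*s4*t end.
Definition xv (r : 'rV[R]_6) k := cc k * rc r k.

Lemma cc_neq0 k : cc k != 0.
Proof.
by case: k => [|[|[|[|[|k]]]]] /=; rewrite !mulf_neq0 // gt_eqF.
Qed.

Definition MS := Mset (s1^+2) (s2^+2) (s3^+2) (s4^+2).

Lemma MS_iff r : MS r <->
  (xv r 0 ^+2 + xv r 1 ^+2 + xv r 2 ^+2 + xv r 3 ^+2 + xv r 4 ^+2 + xv r 5 ^+2 = 1 /\
   xv r 0 * xv r 5 + xv r 2 * xv r 3 - xv r 1 * xv r 4 = 0).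
Proof.
have eI : inertia (s1^+2) (s2^+2) (s3^+2) (s4^+2) r =
  xv r 0 ^+2 + xv r 1 ^+2 + xv r 2 ^+2 + xv r 3 ^+2 + xv r 4 ^+2 + xv r 5 ^+2.
  by rewrite /inertia ht /xv /=; ring.
have eP : Ppoly r * (s1*s2*s3*s4*t^+2) =
  xv r 0 * xv r 5 + xv r 2 * xv r 3 - xv r 1 * xv r 4.
  by rewrite /Ppoly /xv /=; ring.
have nz : s1*s2*s3*s4*t^+2 != 0.
  by rewrite !mulf_neq0 ?expf_neq0 // gt_eqF.
rewrite /MS /Mset /= eI -eP; split=> [[-> ->]|[-> /eqP]]; first by rewrite mul0r.
by rewrite mulf_eq0 (negbTE nz) orbF => /eqP.
Qed.

Definition Fe (r : 'rV[R]_6) k := match k with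
  | 0 => xv r 0 + xv r 5 | 1 => xv r 1 - xv r 4 | 2 => xv r 2 + xv r 3
  | 3 => xv r 0 - xv r 5 | 4 => xv r 1 + xv r 4 | _ => xv r 2 - xv r 3 end.
Definition Fm r : 'rV[R]_6 := \row_(j < 6) Fe r (val j).
Definition Xe (y : 'rV[R]_6) k := match k with
  | 0 => (rc y 0 + rc y 3)/2 | 1 => (rc y 1 + rc y 4)/2 | 2 => (rc y 2 + rc y 5)/2
  | 3 => (rc y 2 - rc y 5)/2 | 4 => (rc y 4 - rc y 1)/2 | _ => (rc y 0 - rc y 3)/2 end.
Definition Gm y : 'rV[R]_6 := \row_(j < 6) (Xe y (val j) / cc (val j)).

Lemma xv_Gm y k : (k < 6)%N -> xv (Gm y) k = Xe y k.
Proof.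
move=> hk; rewrite /xv (rc_row _ (fun j => Xe y j / cc j)) //.
by rewrite mulrC divfK // cc_neq0.
Qed.

Lemma Fm_lin : linear Fm.
Proof.
move=> a u v; apply: row6_eq => k hk; rewrite rc_lin.
rewrite !(rc_row _ (Fe _)) //.
case: k hk => [|[|[|[|[|[|k]]]]]] //= _; rewrite /xv !rc_lin; ring.
Qed.

Lemma Gm_lin : linear Gm.
Proof.
move=> a u v; apply: row6_eq => k hk; rewrite rc_lin.
rewrite !(rc_row _ (fun j => Xe _ j / cc j)) //.
case: k hk => [|[|[|[|[|[|k]]]]]] //= _; rewrite !rc_lin; field; rewrite !gt_eqF //.
Qed.

Lemma S2_part : diffeomorphic MS (@S2xS2 R).
Proof.
exists Fm, Gm; split.
- exact: linear_smooth Fm_lin.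
- exact: linear_smooth Gm_lin.
- move=> _ [r /MS_iff [h1 h2] <-]; rewrite /S2xS2 /= !(rc_row _ (Fe _)) //=.
  split; nra.
- move=> _ [y [h1 h2] <-]; apply/MS_iff; rewrite !xv_Gm //=.
  split; nra.
split.
- move=> r _; apply: row6_eq => k hk.
  rewrite (rc_row _ (fun j => Xe _ j / cc j)) //.
  case: k hk => [|[|[|[|[|[|k]]]]]] //= _; rewrite !(rc_row _ (Fe _)) //= /xv;
  rewrite /cc /=; field; rewrite ?gt_eqF //.
- move=> y _; apply: row6_eq => k hk.
  rewrite (rc_row _ (Fe _)) //.
  case: k hk => [|[|[|[|[|[|k]]]]]] //= _; rewrite !xv_Gm //=; by field.
Qed.

End Core.

Section Quat.
Variable R : realType.

Lemma eq_mod (X Y c S : R) : S = 1 -> X - Y = c * (S - 1) -> X = Y.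
Proof. by move=> -> /eqP; rewrite subrr mulr0 subr_eq0 => /eqP. Qed.

Definition nrm (p0 p1 p2 p3 : R) := p0^+2 + p1^+2 + p2^+2 + p3^+2.
Definition rot1 (p0 p1 p2 p3 : R) := p0^+2 + p1^+2 - p2^+2 - p3^+2.
Definition rot2 (p0 p1 p2 p3 : R) := 2 * (p1 * p2 + p0 * p3).
Definition rot3 (p0 p1 p2 p3 : R) := 2 * (p1 * p3 - p0 * p2).

Lemma rot_exists (a1 a2 a3 : R) : a1^+2 + a2^+2 + a3^+2 = 1 ->
  exists p0 p1 p2 p3, [/\ 0 < nrm p0 p1 p2 p3,
    rot1 p0 p1 p2 p3 = nrm p0 p1 p2 p3 * a1,
    rot2 p0 p1 p2 p3 = nrm p0 p1 p2 p3 * a2 &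
    rot3 p0 p1 p2 p3 = nrm p0 p1 p2 p3 * a3].
Proof.
move=> h; case: (eqVneq a1 (-1)) => [e|ne].
  have h23 : a2^+2 + a3^+2 = 0 by move: h; rewrite e; lra.
  have /andP[/eqP z2 /eqP z3] : (a2^+2 == 0) && (a3^+2 == 0).
    by rewrite -paddr_eq0 ?sqr_ge0 // h23.
  move/eqP: z2; rewrite sqrf_eq0 => /eqP ->.
  move/eqP: z3; rewrite sqrf_eq0 => /eqP ->.
  exists 0, 0, 1, 0; rewrite /nrm /rot1 /rot2 /rot3 e; split; lra.
have pos : 0 < (1 + a1)^+2.
  rewrite exprn_even_gt0 //; apply: contra_neq ne => h0; lra.
exists (1 + a1), 0, (- a3), a2; rewrite /nrm /rot1 /rot2 /rot3; split.
- have := sqr_ge0 a3; have := sqr_ge0 a2; rewrite -sqrrN; lra.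
- by apply: (@eq_mod _ _ (-(1+a1)) _ h); ring.
- by apply: (@eq_mod _ _ (- a2) _ h); ring.
- by apply: (@eq_mod _ _ (- a3) _ h); ring.
Qed.

Definition Qe (p0 p1 p2 p3 q0 q1 q2 q3 : R) (i j : nat) : R := match i, j with
  | 0, 0 => p0*q0 + p1*q1 + p2*q2 + p3*q3
  | 0, 1 => p0*q1 - p1*q0 - p2*q3 + p3*q2
  | 0, 2 => p0*q2 + p1*q3 - p2*q0 - p3*q1
  | 0, 3 => p0*q3 - p1*q2 + p2*q1 - p3*q0
  | 1, 0 => -p0*q1 + p1*q0 - p2*q3 + p3*q2
  | 1, 1 => p0*q0 + p1*q1 - p2*q2 - p3*q3
  | 1, 2 => -p0*q3 + p1*q2 + p2*q1 - p3*q0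
  | 1, 3 => p0*q2 + p1*q3 + p2*q0 + p3*q1
  | 2, 0 => -p0*q2 + p1*q3 + p2*q0 - p3*q1
  | 2, 1 => p0*q3 + p1*q2 + p2*q1 + p3*q0
  | 2, 2 => p0*q0 - p1*q1 + p2*q2 - p3*q3
  | 2, 3 => -p0*q1 - p1*q0 + p2*q3 + p3*q2
  | 3, 0 => -p0*q3 - p1*q2 + p2*q1 + p3*q0
  | 3, 1 => -p0*q2 + p1*q3 - p2*q0 + p3*q1
  | 3, 2 => p0*q1 + p1*q0 + p2*q3 + p3*q2
  | 3, 3 => p0*q0 - p1*q1 - p2*q2 + p3*q3  | _, _ => 0 end.

Definition Am (x0 x1 x2 x3 x4 x5 : R) (i j : nat) : R := match i, j with
  | 0, 1 => x0 | 0, 2 => x1 | 0, 3 => x2 | 1, 2 => x3 | 1, 3 => x4 | 2, 3 => x5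
  | 1, 0 => - x0 | 2, 0 => - x1 | 3, 0 => - x2 | 2, 1 => - x3 | 3, 1 => - x4
  | 3, 2 => - x5 | _, _ => 0 end.
Definition Amx x0 x1 x2 x3 x4 x5 : 'M[R]_4 :=
  \matrix_(i < 4, j < 4) Am x0 x1 x2 x3 x4 x5 (val i) (val j).

Lemma QQt_id p0 p1 p2 p3 q0 q1 q2 q3 i j : (i < 4)%N -> (j < 4)%N ->
  let Q := Qe p0 p1 p2 p3 q0 q1 q2 q3 in
  Q i 0 * Q j 0 + Q i 1 * Q j 1 + Q i 2 * Q j 2 + Q i 3 * Q j 3
  = (i == j)%:R * (nrm p0 p1 p2 p3 * nrm q0 q1 q2 q3).
Proof.
rewrite /nrm /= => hi hj; move: hi hj.
by case: i => [|[|[|[|i]]]] //= _; case: j => [|[|[|[|j]]]] //= _; ring.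
Qed.

Lemma QEQ_id p0 p1 p2 p3 q0 q1 q2 q3 i j : (i < 4)%N -> (j < 4)%N ->
  let Q := Qe p0 p1 p2 p3 q0 q1 q2 q3 in
  let Np := nrm p0 p1 p2 p3 in let Nq := nrm q0 q1 q2 q3 in
  Q i 0 * Q j 1 - Q i 1 * Q j 0 =
  Am ((Nq * rot1 p0 p1 p2 p3 + Np * rot1 q0 q1 q2 q3) / 2)
     ((Nq * rot2 p0 p1 p2 p3 + Np * rot2 q0 q1 q2 q3) / 2)
     ((Nq * rot3 p0 p1 p2 p3 + Np * rot3 q0 q1 q2 q3) / 2)
     ((Nq * rot3 p0 p1 p2 p3 - Np * rot3 q0 q1 q2 q3) / 2)
     ((Np * rot2 q0 q1 q2 q3 - Nq * rot2 p0 p1 p2 p3) / 2)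
     ((Nq * rot1 p0 p1 p2 p3 - Np * rot1 q0 q1 q2 q3) / 2) i j.
Proof.
rewrite /nrm /rot1 /rot2 /rot3 /=.
by case: i => [|[|[|[|i]]]] //= _; case: j => [|[|[|[|j]]]] //= _; field.
Qed.

End Quat.
Arguments nrm {R}. Arguments rot1 {R}. Arguments rot2 {R}. Arguments rot3 {R}.
Arguments Qe {R}. Arguments Am {R}. Arguments Amx {R}.

Section GrAlg.
Variable R : realType.

Lemma ent_QEQ (M : 'M[R]_4) i j :
  ent (M *m E12 *m M^T) i j = ent M i 0 * ent M j 1 - ent M i 1 * ent M j 0.
Proof. rewrite !ent_mul !ent_tr !ent_E12 //=; ring. Qed.

Definition Dm : 'M[R]_4 := diag_mx (\row_(j < 4) (if val j == 3%N then -1 else 1)).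

Lemma ent_Dm i j : (i < 4)%N -> (j < 4)%N ->
  ent Dm i j = if i == j then (if i == 3%N then -1 else 1) else 0.
Proof.
move=> hi hj; rewrite /ent /Dm !mxE -(inj_eq val_inj) /= !inordK //.
by case: (i == j); rewrite ?mulr1n ?mulr0n.
Qed.

Lemma det_Dm : \det Dm = -1.
Proof. by rewrite det_diag !big_ord_recr big_ord0 /= !mxE /= !mul1r. Qed.

Lemma DDt : Dm *m Dm^T = 1%:M.
Proof.
apply: mx4_eq => i j hi hj; rewrite ent_mul !ent_tr !ent_Dm // ent_1 //.
by case: i hi => [|[|[|[|i]]]] //= _; case: j hj => [|[|[|[|j]]]] //= _; ring.
Qed.

Lemma DED : Dm *m E12 *m Dm^T = E12.
Proof.
apply: mx4_eq => i j hi hj; rewrite !ent_mul !ent_tr !ent_Dm // !ent_E12 //.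
by case: i hi => [|[|[|[|i]]]] //= _; case: j hj => [|[|[|[|j]]]] //= _; ring.
Qed.

Lemma fix_det (Q A : 'M[R]_4) : Q *m Q^T = 1%:M -> Q *m E12 *m Q^T = A ->
  Grplus24 A.
Proof.
move=> hQ hA.
have d2 : \det Q ^+ 2 = 1 by rewrite expr2 -{2}det_tr -det_mulmx hQ det1.
move: d2 => /eqP; rewrite sqrf_eq1 => /orP [/eqP d1 | /eqP d1].
  by exists Q.
exists (Q *m Dm).
  split.
    by rewrite trmx_mul mulmxA -(mulmxA Q) DDt mulmx1 hQ.
  by rewrite det_mulmx d1 det_Dm mulrNN mulr1.
rewrite trmx_mul (_ : Q *m Dm *m E12 *m (Dm^T *m Q^T) = Q *m (Dm *m E12 *m Dm^T) *m Q^T).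
  by rewrite DED.
by rewrite !mulmxA.
Qed.

Lemma sum4_scale (c a0 a1 a2 a3 b0 b1 b2 b3 : R) :
  c*a0*(c*b0) + c*a1*(c*b1) + c*a2*(c*b2) + c*a3*(c*b3) =
  c^+2 * (a0*b0 + a1*b1 + a2*b2 + a3*b3).
Proof. ring. Qed.

Lemma det2_scale (c a b d e : R) : c*a*(c*b) - c*d*(c*e) = c^+2 * (a*b - d*e).
Proof. ring. Qed.

Lemma gr_exists (x0 x1 x2 x3 x4 x5 : R) :
  x0^+2 + x1^+2 + x2^+2 + x3^+2 + x4^+2 + x5^+2 = 1 ->
  x0 * x5 + x2 * x3 - x1 * x4 = 0 -> Grplus24 (Amx x0 x1 x2 x3 x4 x5).
Proof.
move=> h1 h2.
have ha : (x0+x5)^+2 + (x1-x4)^+2 + (x2+x3)^+2 = 1 by nra.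
have hb : (x0-x5)^+2 + (x1+x4)^+2 + (x2-x3)^+2 = 1 by nra.
have [p0 [p1 [p2 [p3 [Np0 e1 e2 e3]]]]] := rot_exists _ _ _ _ ha.
have [q0 [q1 [q2 [q3 [Nq0 f1 f2 f3]]]]] := rot_exists _ _ _ _ hb.
have NN : 0 < nrm p0 p1 p2 p3 * nrm q0 q1 q2 q3 by exact: mulr_gt0.
pose k := Num.sqrt (nrm p0 p1 p2 p3 * nrm q0 q1 q2 q3).
have kinv2 : (k^-1)^+2 * (nrm p0 p1 p2 p3 * nrm q0 q1 q2 q3) = 1.
  by rewrite exprVn sqr_sqrtr ?ltW // mulVf // gt_eqF.
pose Q := k^-1 *: \matrix_(i < 4, j < 4) Qe p0 p1 p2 p3 q0 q1 q2 q3 (val i) (val j).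
have entQ : forall i j, (i < 4)%N -> (j < 4)%N ->
    ent Q i j = k^-1 * Qe p0 p1 p2 p3 q0 q1 q2 q3 i j.
  by move=> i j hi hj; rewrite ent_scale ent_mx.
apply: (@fix_det Q).
  apply: mx4_eq => i j hi hj.
  rewrite ent_mul !ent_tr !entQ // ent_1 // sum4_scale.
  have := QQt_id _ p0 p1 p2 p3 q0 q1 q2 q3 i j hi hj => /= ->.
  by rewrite mulrCA kinv2 mulr1.
apply: mx4_eq => i j hi hj.
rewrite ent_QEQ !entQ // det2_scale /Amx ent_mx //.
have := QEQ_id _ p0 p1 p2 p3 q0 q1 q2 q3 i j hi hj => /= ->.
rewrite e1 e2 e3 f1 f2 f3.
rewrite (_ : Am _ _ _ _ _ _ i j = (nrm p0 p1 p2 p3 * nrm q0 q1 q2 q3) * Am x0 x1 x2 x3 x4 x5 i j).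
  by rewrite mulrA kinv2 mul1r.
by case: i hi => [|[|[|[|i]]]] //= _; case: j hj => [|[|[|[|j]]]] //= _; field.
Qed.

Lemma lagrange (u0 u1 u2 u3 v0 v1 v2 v3 : R) :
  u0*u0 + u1*u1 + u2*u2 + u3*u3 = 1 ->
  v0*v0 + v1*v1 + v2*v2 + v3*v3 = 1 ->
  u0*v0 + u1*v1 + u2*v2 + u3*v3 = 0 ->
  (u0*v1 - v0*u1)^+2 + (u0*v2 - v0*u2)^+2 + (u0*v3 - v0*u3)^+2 +
  (u1*v2 - v1*u2)^+2 + (u1*v3 - v1*u3)^+2 + (u2*v3 - v2*u3)^+2 = 1 /\
  (u0*v1 - v0*u1) * (u2*v3 - v2*u3) + (u0*v3 - v0*u3) * (u1*v2 - v1*u2)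
  - (u0*v2 - v0*u2) * (u1*v3 - v1*u3) = 0.
Proof.
move=> hu hv huv; split; last by ring.
have -> : (u0*v1 - v0*u1)^+2 + (u0*v2 - v0*u2)^+2 + (u0*v3 - v0*u3)^+2 +
  (u1*v2 - v1*u2)^+2 + (u1*v3 - v1*u3)^+2 + (u2*v3 - v2*u3)^+2 =
  (u0*u0 + u1*u1 + u2*u2 + u3*u3) * (v0*v0 + v1*v1 + v2*v2 + v3*v3)
  - (u0*v0 + u1*v1 + u2*v2 + u3*v3)^+2 by ring.
by rewrite hu hv huv; ring.
Qed.

End GrAlg.

Section GrCore.
Variable R : realType.
Variables s1 s2 s3 s4 t : R.
Hypotheses (hs1 : 0 < s1) (hs2 : 0 < s2) (hs3 : 0 < s3) (hs4 : 0 < s4) (hst : 0 < t).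
Hypothesis ht : (2 * (s1^+2 + s2^+2 + s3^+2 + s4^+2))^-1 = t^+2.

Local Notation ccN := (cc R s1 s2 s3 s4 t).
Local Notation xvN := (xv R s1 s2 s3 s4 t).

Definition f2 (r : 'rV[R]_6) : 'M[R]_4 :=
  Amx (xvN r 0) (xvN r 1) (xvN r 2) (xvN r 3) (xvN r 4) (xvN r 5).
Definition g2e (A : 'M[R]_4) k := match k with
  | 0 => ent A 0 1 | 1 => ent A 0 2 | 2 => ent A 0 3 | 3 => ent A 1 2
  | 4 => ent A 1 3 | _ => ent A 2 3 end.
Definition g2 (A : 'M[R]_4) : 'rV[R]_6 := \row_(j < 6) (g2e A (val j) / ccN (val j)).

Lemma cc_nz k : ccN k != 0.
Proof. exact: cc_neq0. Qed.

Lemma xv_g2 A k : (k < 6)%N -> xvN (g2 A) k = g2e A k.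
Proof.
move=> hk; rewrite /xv (rc_row _ (fun j => g2e A j / ccN j)) //.
by rewrite mulrC divfK // cc_nz.
Qed.

Lemma f2_lin : linear f2.
Proof.
move=> a u v; apply: mx4_eq => i j hi hj; rewrite ent_lin /f2 /Amx !ent_mx //.
by case: i hi => [|[|[|[|i]]]] //= _; case: j hj => [|[|[|[|j]]]] //= _;
  rewrite /xv ?rc_lin; ring.
Qed.

Lemma g2_lin : linear g2.
Proof.
move=> a u v; apply: row6_eq => k hk; rewrite rc_lin.
rewrite !(rc_row _ (fun j => g2e _ j / ccN j)) //.
case: k hk => [|[|[|[|[|[|k]]]]]] //= _; rewrite !ent_lin; field; rewrite !gt_eqF //.
Qed.

Lemma Gr_part : diffeomorphic (MS R s1 s2 s3 s4) (@Grplus24 R).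
Proof.
exists f2, g2; split.
- exact: linear_smooth f2_lin.
- exact: linear_smooth g2_lin.
- move=> _ [r /(@MS_iff R s1 s2 s3 s4 t hs1 hs2 hs3 hs4 hst ht) [h1 h2] <-].
  exact: gr_exists h1 h2.
- move=> _ [A [Q [hQ _] <-] <-]; apply/(@MS_iff R s1 s2 s3 s4 t hs1 hs2 hs3 hs4 hst ht).
  rewrite !xv_g2 //= !ent_QEQ.
  have hQt : Q^T *m Q = 1%:M by apply: mulmx1C.
  have E a b : (a < 4)%N -> (b < 4)%N -> ent Q 0 a * ent Q 0 b + ent Q 1 a * ent Q 1 b
      + ent Q 2 a * ent Q 2 b + ent Q 3 a * ent Q 3 b = (a == b)%:R.
    by move=> ha hb; rewrite -(@ent_1 R a b ha hb) -hQt ent_mul !ent_tr.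
  apply: lagrange.
  + exact: (E 0%N 0%N).
  + exact: (E 1%N 1%N).
  + exact: (E 0%N 1%N).
split.
- move=> r _; apply: row6_eq => k hk.
  rewrite (rc_row _ (fun j => g2e _ j / ccN j)) //.
  case: k hk => [|[|[|[|[|[|k]]]]]] //= _; rewrite /f2 /Amx ent_mx //= /xv;
  rewrite /cc /=; field; rewrite !gt_eqF //.
- move=> _ [Q _ <-]; apply: mx4_eq => i j hi hj.
  rewrite /f2 !xv_g2 // /Amx ent_mx //.
  by case: i hi => [|[|[|[|i]]]] //= _; case: j hj => [|[|[|[|j]]]] //= _;
    rewrite !ent_QEQ; ring.
Qed.

End GrCore.

Theorem lemma4 (R : realType) (m1 m2 m3 m4 : R)
  (h1 : 0 < m1) (h2 : 0 < m2) (h3 : 0 < m3) (h4 : 0 < m4) :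
  diffeomorphic (Mset m1 m2 m3 m4) (@Grplus24 R) /\
  diffeomorphic (Mset m1 m2 m3 m4) (@S2xS2 R).
Proof.
have sq : forall m : R, 0 < m -> exists2 s : R, 0 < s & m = s^+2.
  move=> m hm; exists (Num.sqrt m); first by rewrite sqrtr_gt0.
  by rewrite sqr_sqrtr // ltW.
have [s1 hs1 e1] := sq _ h1; have [s2 hs2 e2] := sq _ h2.
have [s3 hs3 e3] := sq _ h3; have [s4 hs4 e4] := sq _ h4.
subst m1 m2 m3 m4.
have hM : 0 < 2 * (s1^+2 + s2^+2 + s3^+2 + s4^+2).
  by rewrite mulr_gt0 // !addr_gt0 // exprn_gt0.
pose t := (Num.sqrt (2 * (s1^+2 + s2^+2 + s3^+2 + s4^+2)))^-1.
have hst : 0 < t by rewrite invr_gt0 sqrtr_gt0.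
have ht : (2 * (s1^+2 + s2^+2 + s3^+2 + s4^+2))^-1 = t^+2.
  by rewrite /t exprVn sqr_sqrtr // ltW.
split.
  exact: (@Gr_part R s1 s2 s3 s4 t hs1 hs2 hs3 hs4 hst ht).
exact: (@S2_part R s1 s2 s3 s4 t hs1 hs2 hs3 hs4 hst ht).
Qed.
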